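(* Let $\mathcal{C}=\mathsf{CSS}(A,B)$ be a CSS code on $n$ qubits and let $U=\bigotimes_{i=1}^n U_i$ be a $1$-local Clifford circuit with each $U_i\in\{I,P,HP,PH,PHP,H\}$. If $U$ is a logical operator of $\mathcal{C}$, then for each $h\in\{U_{HP},U_{PH},U_H\}$ that is non-empty and a proper subset of $\{1,\dots,n\}$, the code $\mathcal{C}$ splits on $h$.
   Context: A CSS code $\mathsf{CSS}(A,B)$ on $n$ qubits is given by subspaces $A,B\subseteq\mathbb{F}_2^n$ with $a\cdot b=0$ for all $a\in A,b\in B$; its codespace is the common $+1$-eigenspace of $X^a$ ($a\in A$) and $Z^b$ ($b\in B$), where $G^a=\bigotimes_{i:a_i=1}G_i$. A logical operator is a unitary preserving the codespace. $P=\mathrm{diag}(1,i)$, $H$ is Hadamard. For a set $K$ of single-qubit gates, $U_K=\{i: U_i\in K\}$, and $U_G=U_{\{G\}}$. A subspace $A$ splits on a non-empty $h\subsetneq\{1,\dots,n\}$ if $A=A_1\oplus A_2$ with $A_1$ having support $h$ and $A_2$ supported on the complement of $h$; the code splits on $h$ if both $A$ and $B$ split on $h$. *)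

(* Defs.v *)
From HB Require Import structures.
From mathcomp Require Import all_boot all_order all_algebra all_field.
Set Implicit Arguments. Unset Strict Implicit. Unset Printing Implicit Defensive.
Import Order.TTheory GRing.Theory Num.Theory.
Local Open Scope ring_scope.

(* Vectors of F_2^n are row vectors 'rV['F_2]_n; they also label the
   computational basis states |x> of n qubits. *)
Notation bits n := 'rV['F_2]_n.

Definition state (n : nat) := bits n -> algC.

Definition dot2 n (a b : bits n) : 'F_2 := \sum_(i < n) a 0 i * b 0 i.

Definition Xop n (a : bits n) (psi : state n) : state n := fun x => psi (x + a).
Definition Zop n (b : bits n) (psi : state n) : state n :=
  fun x => (if dot2 b x == 0 then 1 else -1) * psi x.

Definition css_ortho n (A B : {vspace bits n}) :=
  forall a b, a \in A -> b \in B -> dot2 a b = 0.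

Definition in_codespace n (A B : {vspace bits n}) (psi : state n) :=
  (forall a, a \in A -> Xop a psi = psi) /\ (forall b, b \in B -> Zop b psi = psi).

Definition Pmx : 'M[algC]_2 := \matrix_(i, j) (if i == j then (if i == 1 then 'i else 1) else 0).
Definition Hmx : 'M[algC]_2 :=
  \matrix_(i, j) ((sqrtC 2)^-1 * (if (i == 1) && (j == 1) then -1 else 1)).

Inductive gate := GI | GP | GHP | GPH | GPHP | GH.
Definition gate_eqb (g h : gate) : bool :=
  match g, h with
  | GI, GI | GP, GP | GHP, GHP | GPH, GPH | GPHP, GPHP | GH, GH => true
  | _, _ => false end.
Lemma gate_eqP : Equality.axiom gate_eqb.
Proof. by case; case; constructor. Qed.
HB.instance Definition _ := hasDecEq.Build gate gate_eqP.

Definition gate_mx (g : gate) : 'M[algC]_2 :=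
  match g with
  | GI => 1%:M | GP => Pmx | GHP => Hmx *m Pmx | GPH => Pmx *m Hmx
  | GPHP => Pmx *m Hmx *m Pmx | GH => Hmx end.

Definition bit_ix (c : 'F_2) : 'I_2 := if c == 0 then ord0 else ord_max.

(* The 1-local circuit U = tensor_i U_i, with U_i = gate_mx (g i), applied to a state:
   <x|U|y> = prod_i <x_i|U_i|y_i>. *)
Definition apply_local n (g : 'I_n -> gate) (psi : state n) : state n :=
  fun x => \sum_(y : bits n) (\prod_(i < n) gate_mx (g i) (bit_ix (x 0 i)) (bit_ix (y 0 i))) * psi y.

Definition is_logical n (A B : {vspace bits n}) (g : 'I_n -> gate) :=
  forall psi, in_codespace A B psi -> in_codespace A B (apply_local g psi).

Definition gate_support n (g : 'I_n -> gate) (G : gate) : {set 'I_n} :=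
  [set i | g i == G].

Definition supported_in n (S : {set 'I_n}) (V : {vspace bits n}) :=
  forall v, v \in V -> forall i, i \notin S -> v 0 i = 0.

Definition vsplits n (V : {vspace bits n}) (h : {set 'I_n}) :=
  exists A1 A2 : {vspace bits n},
    [/\ supported_in h A1, supported_in (~: h) A2, directv (A1 + A2) & (A1 + A2)%VS = V].

Definition code_splits n (A B : {vspace bits n}) (h : {set 'I_n}) :=
  vsplits A h /\ vsplits B h.

(* Main.v *)
Require Import Defs.
From HB Require Import structures.
From mathcomp Require Import all_boot all_order all_algebra all_field ring.
From Stdlib Require Import FunctionalExtensionality.
Set Implicit Arguments. Unset Strict Implicit. Unset Printing Implicit Defensive.
Import Order.TTheory GRing.Theory Num.Theory.
Local Open Scope ring_scope.

Lemma F2P (t : 'F_2) : t = 0 \/ t = 1.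
Proof. case: t => [[|[|k]] Hk]; [left|right|]; try by apply: val_inj. by []. Qed.

Definition b2n (t : 'F_2) : nat := (t != 0).
Definition ii (k : nat) : algC := 'i ^+ k.
Definition r2 : algC := (sqrtC 2)^-1.

Lemma ii4 : ii 4 = 1.
Proof. by rewrite /ii (exprM _ 2 2) sqrCi expr2 mulrNN mulr1. Qed.

Lemma iimod m : ii m = ii (m %% 4).
Proof. by rewrite {1}(divn_eq m 4) /ii exprD mulnC exprM -/(ii 4) ii4 expr1n mul1r. Qed.

Lemma iiD m k : ii (m + k) = ii m * ii k.
Proof. exact: exprD. Qed.

Definition isdiag (g : gate) := (g == GI) || (g == GP).
Definition pexp (g : gate) (x : nat) : nat := if g == GP then x else 0.
Definition eexp (g : gate) (x y : nat) : nat :=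
  (2 * x * y + match g with GHP => y | GPH => x | GPHP => x + y | _ => 0 end)%N.
Definition ent (g : gate) (x y : 'F_2) : algC :=
  if isdiag g then (if x == y then ii (pexp g (b2n x)) else 0)
  else r2 * ii (eexp g (b2n x) (b2n y)).

Lemma entE g x y : gate_mx g (bit_ix x) (bit_ix y) = ent g x y.
Proof.
rewrite /ent /ii /r2.
case: g; case: (F2P x) => ->; case: (F2P y) => -> /=;
rewrite /bit_ix /= ?mxE ?big_ord_recl ?big_ord0 /= ?mxE ?big_ord_recl ?big_ord0 /= ?mxE.
all: rewrite /b2n /eexp /pexp /=; have hi := @mulCii algC; ring: hi.
Qed.

Definition sgn (t : 'F_2) : algC := if t == 0 then 1 else -1.
Definition gXt (g : gate) : 'F_2 * 'F_2 :=
  match g with GI => (1,0) | GP => (1,1) | GHP => (0,1) | GPH => (1,1) | GPHP => (1,0) | GH => (0,1) end.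
Definition gZt (g : gate) : 'F_2 * 'F_2 :=
  match g with GI => (0,1) | GP => (0,1) | GHP => (1,1) | GPH => (1,0) | GPHP => (1,1) | GH => (1,0) end.
Definition xp g (a b : 'F_2) : 'F_2 := a * (gXt g).1 + b * (gZt g).1.
Definition zp g (a b : 'F_2) : 'F_2 := a * (gXt g).2 + b * (gZt g).2.
Definition kap g (a b : 'F_2) : nat :=
  if isdiag g then pexp g (b2n a) else eexp g (b2n a) (b2n (xp g a b)).

Lemma comm1 g a b x y :
  sgn (b * x) * ent g (x + a) y =
  ii (kap g a b) * ent g x (y + xp g a b) * sgn (zp g a b * (y + xp g a b)).
Proof.
rewrite /kap /xp /zp /ent /sgn /ii /r2.
case: g; case: (F2P a) => ->; case: (F2P b) => ->; case: (F2P x) => ->; case: (F2P y) => -> /=.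
all: rewrite /b2n /eexp /pexp /=.
all: have hi := @mulCii algC; ring: hi.
Qed.

Definition enti g (z t : 'F_2) : algC :=
  if isdiag g then (if z == t then ii (3 * pexp g (b2n z)) else 0)
  else r2 * ii (3 * eexp g (b2n t) (b2n z)).

Lemma r2sq : (sqrtC 2)^-1 * (sqrtC 2)^-1 * 2 = 1 :> algC.
Proof. by rewrite -invfM -expr2 sqrtCK mulVf // pnatr_eq0. Qed.

Lemma unit1 g z y : \sum_(t : 'F_2) enti g z t * ent g t y = (z == y)%:R.
Proof.
rewrite big_ord_recl big_ord_recl big_ord0.
rewrite /enti /ent /ii /r2.
case: g; case: (F2P z) => ->; case: (F2P y) => -> /=.
all: rewrite /b2n /eexp /pexp /=.

all: have hi := @mulCii algC; have h2 := r2sq; ring: hi h2.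
Qed.

Section NQ.
Variable n : nat.
Implicit Types (x y z a b c v : bits n).

Lemma sum_prod (f : 'I_n -> 'F_2 -> algC) :
  \sum_(x : bits n) \prod_(i < n) f i (x 0 i) = \prod_(i < n) \sum_(t : 'F_2) f i t.
Proof.
rewrite bigA_distr_bigA /=.
rewrite (reindex (fun x : bits n => [ffun i => x 0 i])) /=.
  by apply: eq_bigr => x _; apply: eq_bigr => i _; rewrite ffunE.
exists (fun h : {ffun 'I_n -> 'F_2} => \row_i h i) => [x _|h _].
  by apply/rowP => i; rewrite mxE ffunE.
by apply/ffunP => i; rewrite ffunE mxE.
Qed.

Lemma addxx_F2 (t : 'F_2) : t + t = 0.
Proof. by case: (F2P t) => ->; apply: val_inj. Qed.

Lemma addvv2 x : x + x = 0.
Proof. by apply/rowP => i; rewrite !mxE addxx_F2. Qed.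

Definition Kk (g : 'I_n -> gate) x y := \prod_(i < n) ent (g i) (x 0 i) (y 0 i).

Lemma applyE g psi x : apply_local g psi x = \sum_y Kk g x y * psi y.
Proof. by apply: eq_bigr => y _; congr (_ * _); apply: eq_bigr => i _; rewrite entE. Qed.

Definition Uinv (g : 'I_n -> gate) (phi : state n) : state n :=
  fun z => \sum_(x : bits n) (\prod_(i < n) enti (g i) (z 0 i) (x 0 i)) * phi x.

Lemma kinv g z y :
  \sum_(x : bits n) (\prod_(i < n) enti (g i) (z 0 i) (x 0 i)) * Kk g x y = (z == y)%:R.
Proof.
rewrite /Kk.
under eq_bigr => x _ do rewrite -big_split /=.
rewrite (sum_prod (fun i t => enti (g i) (z 0 i) t * ent (g i) t (y 0 i))).
have [->|yz] := eqVneq z y.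
  by rewrite big1 // => i _; rewrite unit1 eqxx.
have [i ni] : exists i, z 0 i != y 0 i.
  case: (pickP (fun i => z 0 i != y 0 i)) => [i ni|none]; first by exists i.
  by case/eqP: yz; apply/rowP => i; move: (none i) => /negbFE/eqP.
by rewrite (bigD1 i) //= unit1 (negbTE ni) mul0r.
Qed.

Lemma UinvK g psi z : Uinv g (apply_local g psi) z = psi z.
Proof.
rewrite /Uinv.
under eq_bigr => x _ do rewrite applyE mulr_sumr.
rewrite exchange_big /=.
under eq_bigr => y _ do (under eq_bigr => x _ do rewrite mulrA; rewrite -mulr_suml kinv).
rewrite (bigD1 z) //= eqxx mul1r big1 ?addr0 // => y yz.
by rewrite eq_sym (negbTE yz) mul0r.
Qed.

Lemma U_inj g psi1 psi2 :
  (forall x, apply_local g psi1 x = apply_local g psi2 x) -> forall z, psi1 z = psi2 z.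
Proof.
move=> H z; rewrite -(UinvK g psi1) -(UinvK g psi2) /Uinv.
by apply: eq_bigr => x _; rewrite H.
Qed.

Lemma sgnD s t : sgn (s + t) = sgn s * sgn t.
Proof.
rewrite /sgn; case: (F2P s) => ->; case: (F2P t) => -> /=; rewrite ?mul1r ?mulr1 //.
by rewrite mulrNN mulr1.
Qed.

Lemma sgn_dot b x : sgn (dot2 b x) = \prod_(i < n) sgn (b 0 i * x 0 i).
Proof. by rewrite /dot2 (big_morph sgn sgnD (id1 := 1) (id2 := 0)) // /sgn eqxx. Qed.

Definition Pop a b (phi : state n) : state n := fun x => sgn (dot2 b x) * phi (x + a).

Definition xpv g a b : bits n := \row_i xp (g i) (a 0 i) (b 0 i).
Definition zpv g a b : bits n := \row_i zp (g i) (a 0 i) (b 0 i).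
Definition kp g a b : algC := \prod_(i < n) ii (kap (g i) (a 0 i) (b 0 i)).

Definition Qop g a b (psi : state n) : state n :=
  fun y => kp g a b * sgn (dot2 (zpv g a b) y) * psi (y + xpv g a b).

Lemma commP g a b psi x :
  Pop a b (apply_local g psi) x = apply_local g (Qop g a b psi) x.
Proof.
rewrite /Pop !applyE mulr_sumr.
rewrite [RHS](reindex_inj (addIr (xpv g a b))) /=.
apply: eq_bigr => y _.
rewrite /Qop -addrA addvv2 addr0 !mulrA; congr (_ * _).
rewrite !sgn_dot /Kk /kp -!big_split /=.
apply: eq_bigr => i _.
by rewrite !mxE comm1; ring.
Qed.

Lemma dot20 x : dot2 0 x = 0.
Proof. by rewrite /dot2 big1 // => i _; rewrite mxE mul0r. Qed.

Lemma dot2C x y : dot2 x y = dot2 y x.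
Proof. by apply: eq_bigr => i _; rewrite mulrC. Qed.

Lemma dot2D x y z : dot2 x (y + z) = dot2 x y + dot2 x z.
Proof. by rewrite /dot2 -big_split; apply: eq_bigr => i _; rewrite mxE mulrDr. Qed.

Lemma XopE a phi x : Xop a phi x = Pop a 0 phi x.
Proof. by rewrite /Pop dot20 /sgn eqxx mul1r. Qed.

Lemma ZopE b phi x : Zop b phi x = Pop 0 b phi x.
Proof. by rewrite /Pop addr0. Qed.

End NQ.

Section Dorth.
Variable n : nat.
Implicit Types (x y z a b c v : bits n).

Lemma dorth (B : {vspace bits n}) v :
  (forall c, (forall b, b \in B -> dot2 b c = 0) -> dot2 v c = 0) -> v \in B.
Proof.
move=> H; apply/negPn/negP => vB.
have [j vj] : exists j, v 0 j != 0.
  case: (pickP (fun j => v 0 j != 0)) => [j nj|none]; first by exists j.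
  have v0 : v = 0 by apply/rowP => i; rewrite mxE; move: (none i) => /negbFE/eqP.
  by rewrite v0 mem0v in vB.
have cap : (<[v]> :&: B = 0)%VS.
  apply/vspaceP => w; rewrite memv_cap memv0; apply/andP/eqP => [[/vlineP[k ->] kvB]|->].
    by case: (F2P k) kvB => ->; rewrite ?scale0r // scale1r => /(negP vB).
  by rewrite !mem0v.
pose pi := daddv_pi <[v]> B.
pose f := fun x => pi x 0 j.
pose c : bits n := \row_i f (delta_mx 0 i).
have fE x : dot2 x c = f x.
  rewrite /f {2}(row_sum_delta x) linear_sum summxE /dot2.
  by apply: eq_bigr => i _; rewrite linearZ !mxE.
have cB : forall b, b \in B -> dot2 b c = 0.
  move=> b bB; rewrite fE /f.
  have := daddv_pi_add cap (subvP (addvSr _ _) _ bB).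
  rewrite (daddv_pi_id _ bB); last by rewrite capvC.
  by move/(congr1 (fun w => w - b)); rewrite addrK subrr => ->; rewrite mxE.
have := H c cB; rewrite fE /f /pi daddv_pi_id ?memv_line //.
by move/eqP; rewrite (negbTE vj).
Qed.

End Dorth.



Section Main.
Variable n : nat.
Variables (A B : {vspace bits n}) (g : 'I_n -> gate).
Hypothesis ortho : css_ortho A B.
Implicit Types (x y z a b c v : bits n).

Definition tst c : state n := fun x => if x + c \in A then 1 else 0.

Lemma tst_code c : (forall b, b \in B -> dot2 b c = 0) -> in_codespace A B (tst c).
Proof.
move=> cB; split.
  move=> a aA; apply: functional_extensionality => x.
  by rewrite /Xop /tst addrAC rpredDr.
move=> b bB; apply: functional_extensionality => x.
rewrite /Zop /tst; case xcA: (x + c \in A); last by rewrite mulr0.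
have -> : dot2 b x = 0.
  have -> : x = (x + c) + c by rewrite -addrA addvv2 addr0.
  by rewrite dot2D dot2C ortho // cB // addr0.
by rewrite eqxx mulr1.
Qed.

Lemma stab_mem al be :
  (forall psi, in_codespace A B psi -> forall y, Qop g al be psi y = psi y) ->
  xpv g al be \in A /\ zpv g al be \in B.
Proof.
move=> HQ.
have c0 : forall b, b \in B -> dot2 b 0 = 0 by move=> b _; rewrite dot2C dot20.
have H0 := HQ _ (tst_code c0) 0.
rewrite /Qop /tst !add0r addr0 mem0v in H0.
have xA : xpv g al be \in A.
  by move: H0; case: (xpv g al be \in A) => //; rewrite mulr0 => /eqP; rewrite eq_sym oner_eq0.
rewrite xA mulr1 dot2C dot20 /sgn eqxx mulr1 in H0.
split => //; apply: dorth => c cB.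
have := HQ _ (tst_code cB) c.
rewrite /Qop /tst addvv2 mem0v addrAC addvv2 add0r xA H0 mul1r mulr1 /sgn.
case: (F2P (dot2 (zpv g al be) c)) => -> //.
have -> : (1 == 0 :> 'F_2) = false by []. move/(congr1 (fun t => t + 1)); rewrite addNr => /eqP; rewrite eq_sym -[1 + 1 : algC]/(2%:R) pnatr_eq0 //.
Qed.

Lemma ruleX a : is_logical A B g -> a \in A ->
  xpv g a 0 \in A /\ zpv g a 0 \in B.
Proof.
move=> hL aA; apply: stab_mem => psi hpsi y.
apply: (U_inj (g := g)) => x.
rewrite -commP -XopE.
by have [hX _] := hL psi hpsi; rewrite hX.
Qed.

Lemma ruleZ b : is_logical A B g -> b \in B ->
  xpv g 0 b \in A /\ zpv g 0 b \in B.
Proof.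
move=> hL bB; apply: stab_mem => psi hpsi y.
apply: (U_inj (g := g)) => x.
rewrite -commP -ZopE.
by have [_ hZ] := hL psi hpsi; rewrite hZ.
Qed.

Definition rr (S : pred gate) v : bits n := \row_i if S (g i) then v 0 i else 0.

Lemma rr_eq (S T U : pred gate) v : (forall G, U G = S G && T G) -> rr S (rr T v) = rr U v.
Proof. by move=> h; apply/rowP => i; rewrite !mxE h; case: (S (g i)); case: (T (g i)). Qed.

Lemma rrB (S T U : pred gate) v : (forall G, U G = S G && ~~ T G) -> (forall G, T G -> S G) ->
  rr S v - rr T v = rr U v.
Proof.
move=> h hTS; apply/rowP => i; rewrite !mxE h.
case hT: (T (g i)); first by rewrite (hTS _ hT) subrr.
by case: (S (g i)); rewrite subr0.
Qed.

Definition pXx (G : gate) := fst (gXt G) != 0.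
Definition pXz (G : gate) := snd (gXt G) != 0.
Definition pZx (G : gate) := fst (gZt G) != 0.
Definition pZz (G : gate) := snd (gZt G) != 0.

Lemma xpv_a a : xpv g a 0 = rr pXx a.
Proof.
apply/rowP => i; rewrite !mxE /xp /pXx.
by case: (g i); case: (F2P (a 0 i)) => -> /=; rewrite ?mul0r ?mul1r ?mulr0 ?mulr1 ?addr0 ?add0r.
Qed.
Lemma zpv_a a : zpv g a 0 = rr pXz a.
Proof.
apply/rowP => i; rewrite !mxE /zp /pXz.
by case: (g i); case: (F2P (a 0 i)) => -> /=; rewrite ?mul0r ?mul1r ?mulr0 ?mulr1 ?addr0 ?add0r.
Qed.
Lemma xpv_b b : xpv g 0 b = rr pZx b.
Proof.
apply/rowP => i; rewrite !mxE /xp /pZx.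
by case: (g i); case: (F2P (b 0 i)) => -> /=; rewrite ?mul0r ?mul1r ?mulr0 ?mulr1 ?addr0 ?add0r.
Qed.
Lemma zpv_b b : zpv g 0 b = rr pZz b.
Proof.
apply/rowP => i; rewrite !mxE /zp /pZz.
by case: (g i); case: (F2P (b 0 i)) => -> /=; rewrite ?mul0r ?mul1r ?mulr0 ?mulr1 ?addr0 ?add0r.
Qed.

End Main.

Section Fin.
Variable n : nat.
Variables (A B : {vspace bits n}) (g : 'I_n -> gate).
Implicit Types (x y z a b c v : bits n).

Definition pl (s : seq gate) : pred gate := fun G => G \in s.

Section Chain.
Hypothesis RA1 : forall v, v \in A -> rr g pXx v \in A.
Hypothesis RA2 : forall v, v \in A -> rr g pXz v \in B.
Hypothesis RB1 : forall v, v \in B -> rr g pZx v \in A.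
Hypothesis RB2 : forall v, v \in B -> rr g pZz v \in B.

Lemma chainA a : a \in A ->
  [/\ rr g (pl [:: GHP]) a \in A, rr g (pl [:: GPH]) a \in A & rr g (pl [:: GH]) a \in A].
Proof.
move=> aA.
have c2 : rr g (pl [:: GHP; GPH; GH]) a \in A.
  by rewrite -(@rr_eq _ g pZx pXz) ?RB1 ?RA2 //; case.
have c3 : rr g (pl [:: GPH]) a \in A.
  by rewrite -(@rr_eq _ g pXx (pl [:: GHP; GPH; GH])) ?RA1 //; case.
have c4 : rr g (pl [:: GHP; GH]) a \in A.
  by rewrite -(@rrB _ g (pl [:: GHP; GPH; GH]) (pl [:: GPH])) ?memvB //; case.
have c5 : rr g (pl [:: GHP; GH]) a \in B.
  by rewrite -(@rr_eq _ g pXz (pl [:: GHP; GH])) ?RA2 //; case.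
have c6 : rr g (pl [:: GHP]) a \in B.
  by rewrite -(@rr_eq _ g pZz (pl [:: GHP; GH])) ?RB2 //; case.
have c7 : rr g (pl [:: GHP]) a \in A.
  by rewrite -(@rr_eq _ g pZx (pl [:: GHP])) ?RB1 //; case.
have c8 : rr g (pl [:: GH]) a \in A.
  by rewrite -(@rrB _ g (pl [:: GHP; GH]) (pl [:: GHP])) ?memvB //; case.
by split.
Qed.

Lemma chainB b : b \in B ->
  [/\ rr g (pl [:: GHP]) b \in B, rr g (pl [:: GPH]) b \in B & rr g (pl [:: GH]) b \in B].
Proof.
move=> bB.
have d2 : rr g (pl [:: GHP; GPH; GH]) b \in B.
  by rewrite -(@rr_eq _ g pXz pZx) ?RA2 ?RB1 //; case.
have d3 : rr g (pl [:: GHP]) b \in B.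
  by rewrite -(@rr_eq _ g pZz (pl [:: GHP; GPH; GH])) ?RB2 //; case.
have d4 : rr g (pl [:: GPH; GH]) b \in B.
  by rewrite -(@rrB _ g (pl [:: GHP; GPH; GH]) (pl [:: GHP])) ?memvB //; case.
have d5 : rr g (pl [:: GPH; GH]) b \in A.
  by rewrite -(@rr_eq _ g pZx (pl [:: GPH; GH])) ?RB1 //; case.
have d6 : rr g (pl [:: GPH]) b \in A.
  by rewrite -(@rr_eq _ g pXx (pl [:: GPH; GH])) ?RA1 //; case.
have d7 : rr g (pl [:: GPH]) b \in B.
  by rewrite -(@rr_eq _ g pXz (pl [:: GPH])) ?RA2 //; case.
have d8 : rr g (pl [:: GH]) b \in B.
  by rewrite -(@rrB _ g (pl [:: GPH; GH]) (pl [:: GPH])) ?memvB //; case.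
by split.
Qed.
End Chain.

End Fin.

Section Split.
Variable n : nat.
Variable g : 'I_n -> gate.

Lemma split_of (V : {vspace bits n}) (G : gate) :
  (forall v, v \in V -> rr g (pl [:: G]) v \in V) -> vsplits V (gate_support g G).
Proof.
move=> HV.
pose d1 : bits n := \row_i (if g i == G then 1 else 0).
pose d2 : bits n := \row_i (if g i == G then 0 else 1).
pose f1 : 'End(bits n) := linfun (mulmxr (diag_mx d1)).
pose f2 : 'End(bits n) := linfun (mulmxr (diag_mx d2)).
have f1E v : f1 v = rr g (pl [:: G]) v.
  rewrite lfunE /= mul_mx_diag; apply/rowP => i; rewrite !mxE /pl inE.
  by case: (g i == G); rewrite ?mulr1 ?mulr0.
have f2E v : f2 v = v - rr g (pl [:: G]) v.
  rewrite lfunE /= mul_mx_diag; apply/rowP => i; rewrite !mxE /pl inE.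
  by case: (g i == G); rewrite ?mulr1 ?mulr0 ?subrr ?subr0.
exists (f1 @: V)%VS, (f2 @: V)%VS; split.
- move=> w /memv_imgP[u uV ->] i; rewrite inE f1E mxE /pl inE => /negbTE ->.
  by [].
- move=> w /memv_imgP[u uV ->] i; rewrite !inE negbK f2E !mxE /pl inE => ->.
  by rewrite subrr.
- apply/directv_addP/vspaceP => w; rewrite memv_cap memv0.
  apply/andP/eqP => [[/memv_imgP[u _ ->] /memv_imgP[u' _ e]]|->]; last by rewrite !mem0v.
  apply/rowP => i; rewrite f1E !mxE /pl inE.
  case gi: (g i == G) => //.
  by move/rowP: e => /(_ i); rewrite f1E f2E !mxE /pl inE gi subrr => ->.
- apply/vspaceP => w; apply/memv_addP/idP => [[u /memv_imgP[u1 u1V ->] [v /memv_imgP[v1 v1V ->] ->]]|wV].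
    by rewrite f1E f2E memvD ?memvB ?HV.
  exists (f1 w); first exact: memv_img.
  exists (f2 w); first exact: memv_img.
  by rewrite f1E f2E addrC subrK.
Qed.
End Split.

Theorem proposition7 (n : nat) (A B : {vspace 'rV['F_2]_n}) (g : 'I_n -> gate) :
  css_ortho A B ->
  is_logical A B g ->
  forall G : gate, G \in [:: GHP; GPH; GH] ->
  let h := gate_support g G in
  h != set0 -> h != [set: 'I_n] ->
  code_splits A B h.
Proof.
move=> ortho hL G HG h _ _.
have RA1 v (vA : v \in A) : rr g pXx v \in A by rewrite -xpv_a; case: (ruleX ortho hL vA).
have RA2 v (vA : v \in A) : rr g pXz v \in B by rewrite -zpv_a; case: (ruleX ortho hL vA).
have RB1 v (vB : v \in B) : rr g pZx v \in A by rewrite -xpv_b; case: (ruleZ ortho hL vB).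
have RB2 v (vB : v \in B) : rr g pZz v \in B by rewrite -zpv_b; case: (ruleZ ortho hL vB).
split; apply: split_of => v vV.
  have := chainA RA1 RA2 RB1 RB2 vV.
  by move: HG; rewrite !inE => /or3P[] /eqP -> [].
have := chainB RA1 RA2 RB1 RB2 vV.
by move: HG; rewrite !inE => /or3P[] /eqP -> [].
Qed.
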